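(* Let $\Delta$ be a mesh and let $A:\Delta\to\mathbb{R}$ be 1-increasing. Then: (a) $A$ is grounded if and only if $A^{\mathrm{BL}}$ is grounded; (b) $1$ is a neutral element for $A$ if and only if $1$ is a neutral element for $A^{\mathrm{BL}}$; (c) $A$ is 2-increasing if and only if $A^{\mathrm{BL}}$ is 2-increasing; (d) $A$ is quasi-2-increasing if and only if $A^{\mathrm{BL}}$ is quasi-2-increasing; (e) $A$ is a discrete copula if and only if $A^{\mathrm{BL}}$ is a copula; (f) $A$ is a discrete quasi-copula if and only if $A^{\mathrm{BL}}$ is a quasi-copula.
   Context: A mesh is $\Delta=\delta_x\times\delta_y$ with $\delta_x=\{0=x_0<\dots<x_p=1\}$, $\delta_y=\{0=y_0<\dots<y_q=1\}$. A function is 1-increasing if it is nondecreasing in each variable. $A^{\mathrm{BL}}:[0,1]^2\to\mathbb{R}$ is the function which on each cell $[x_{i-1},x_i]\times[y_{j-1},y_j]$ equals the bilinear interpolation (the unique function taking the given corner values and affine in each variable separately) of the values of $A$ at the cell's corners. Let $\mathbb{D}$ denote either $[0,1]^2$ or a mesh $\Delta$, and let $A:\mathbb{D}\to\mathbb{R}$. For a rectangle $[s_1,s_2]\times[t_1,t_2]$ with corners in $\mathbb{D}$, $V_A=A(s_1,t_1)+A(s_2,t_2)-A(s_2,t_1)-A(s_1,t_2)$. $A$ is grounded if $A(x,0)=0=A(0,y)$ whenever these points are in $\mathbb{D}$; $1$ is a neutral element if $A(x,1)=x$ and $A(1,y)=y$ whenever these points are in $\mathbb{D}$; $A$ is 2-increasing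 if $V_A(R)\ge0$ for every rectangle with corners in $\mathbb{D}$; $A$ is quasi-2-increasing if $V_A(R)\ge0$ for every rectangle with corners in $\mathbb{D}$ at least one of whose sides lies on the boundary of $[0,1]^2$. On $[0,1]^2$, a grounded, 2-increasing function with neutral element 1 is a copula and a grounded, quasi-2-increasing function with neutral element 1 is a quasi-copula; on a mesh $\Delta$ these are called a discrete copula and a discrete quasi-copula, respectively. *)

(* Defs.v *)
From Stdlib Require Import Reals Lra.
Open Scope R_scope.

Definition is_partition (x : nat -> R) (p : nat) : Prop :=
  (1 <= p)%nat /\ x 0%nat = 0 /\ x p = 1 /\
  (forall i : nat, (i < p)%nat -> x i < x (S i)).

(** A function on the mesh Delta = {x_0..x_p} x {y_0..y_q} is given by its
    values on grid indices: A i j is the value at (x i, y j), i <= p, j <= q. *)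

Definition VolR (F : R -> R -> R) (s1 s2 t1 t2 : R) : R :=
  F s1 t1 + F s2 t2 - F s2 t1 - F s1 t2.

Definition VolM (A : nat -> nat -> R) (i1 i2 j1 j2 : nat) : R :=
  A i1 j1 + A i2 j2 - A i2 j1 - A i1 j2.

Definition one_increasing_mesh (p q : nat) (A : nat -> nat -> R) : Prop :=
  (forall i i' j, (i <= i')%nat -> (i' <= p)%nat -> (j <= q)%nat -> A i j <= A i' j) /\
  (forall i j j', (i <= p)%nat -> (j <= j')%nat -> (j' <= q)%nat -> A i j <= A i j').

Definition grounded_mesh (p q : nat) (A : nat -> nat -> R) : Prop :=
  (forall i, (i <= p)%nat -> A i 0%nat = 0) /\
  (forall j, (j <= q)%nat -> A 0%nat j = 0).

Definition neutral_mesh (x y : nat -> R) (p q : nat) (A : nat -> nat -> R) : Prop :=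
  (forall i, (i <= p)%nat -> A i q = x i) /\
  (forall j, (j <= q)%nat -> A p j = y j).

Definition two_increasing_mesh (p q : nat) (A : nat -> nat -> R) : Prop :=
  forall i1 i2 j1 j2, (i1 <= i2)%nat -> (i2 <= p)%nat ->
    (j1 <= j2)%nat -> (j2 <= q)%nat -> 0 <= VolM A i1 i2 j1 j2.

Definition quasi_two_increasing_mesh (p q : nat) (A : nat -> nat -> R) : Prop :=
  forall i1 i2 j1 j2, (i1 <= i2)%nat -> (i2 <= p)%nat ->
    (j1 <= j2)%nat -> (j2 <= q)%nat ->
    (i1 = 0%nat \/ i2 = p \/ j1 = 0%nat \/ j2 = q) ->
    0 <= VolM A i1 i2 j1 j2.

Definition discrete_copula (x y : nat -> R) (p q : nat) (A : nat -> nat -> R) : Prop :=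
  grounded_mesh p q A /\ two_increasing_mesh p q A /\ neutral_mesh x y p q A.

Definition discrete_quasi_copula (x y : nat -> R) (p q : nat) (A : nat -> nat -> R) : Prop :=
  grounded_mesh p q A /\ quasi_two_increasing_mesh p q A /\ neutral_mesh x y p q A.

Definition in01 (t : R) : Prop := 0 <= t <= 1.

Definition grounded_sq (F : R -> R -> R) : Prop :=
  forall t, in01 t -> F t 0 = 0 /\ F 0 t = 0.

Definition neutral_sq (F : R -> R -> R) : Prop :=
  forall t, in01 t -> F t 1 = t /\ F 1 t = t.

Definition two_increasing_sq (F : R -> R -> R) : Prop :=
  forall s1 s2 t1 t2, 0 <= s1 -> s1 <= s2 -> s2 <= 1 ->
    0 <= t1 -> t1 <= t2 -> t2 <= 1 -> 0 <= VolR F s1 s2 t1 t2.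

Definition quasi_two_increasing_sq (F : R -> R -> R) : Prop :=
  forall s1 s2 t1 t2, 0 <= s1 -> s1 <= s2 -> s2 <= 1 ->
    0 <= t1 -> t1 <= t2 -> t2 <= 1 ->
    (s1 = 0 \/ s2 = 1 \/ t1 = 0 \/ t2 = 1) -> 0 <= VolR F s1 s2 t1 t2.

Definition copula (F : R -> R -> R) : Prop :=
  grounded_sq F /\ two_increasing_sq F /\ neutral_sq F.

Definition quasi_copula (F : R -> R -> R) : Prop :=
  grounded_sq F /\ quasi_two_increasing_sq F /\ neutral_sq F.

Fixpoint find_cell (x : nat -> R) (u : R) (i n : nat) : nat :=
  match n with
  | O => i
  | S n' => if Rle_dec u (x i) then i else find_cell x u (S i) n'
  end.

(** index k in 1..p of a cell [x (k-1), x k] containing u (for u in [0,1]):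
    the least k in 1..p with u <= x k (and p if there is none). *)
Definition cell (x : nat -> R) (p : nat) (u : R) : nat :=
  find_cell x u 1 (p - 1).

(** A^BL: on the cell [x(i-1),x i] x [y(j-1),y j] the bilinear interpolation
    of the four corner values. (Values outside [0,1]^2 are irrelevant.) *)
Definition BL (x y : nat -> R) (p q : nat) (A : nat -> nat -> R) (u v : R) : R :=
  let i := cell x p u in
  let j := cell y q v in
  let a := (u - x (i - 1)%nat) / (x i - x (i - 1)%nat) in
  let b := (v - y (j - 1)%nat) / (y j - y (j - 1)%nat) in
  (1 - a) * (1 - b) * A (i - 1)%nat (j - 1)%nat
  + a * (1 - b) * A i (j - 1)%nat
  + (1 - a) * b * A (i - 1)%nat j
  + a * b * A i j.

(* Main.v *)
Require Import Defs.
From Stdlib Require Import Reals Lra Lia Arith.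
Open Scope R_scope.

Lemma fc_props (x : nat -> R) (u : R) : forall n i,
 (i <= find_cell x u i n <= i + n)%nat /\
 ((find_cell x u i n < i + n)%nat -> u <= x (find_cell x u i n)) /\
 (forall m, (i <= m < find_cell x u i n)%nat -> x m < u).
Proof.
  induction n as [|n IH]; intros i; simpl.
  - split; [lia|]. split; [lia|]. intros m Hm; lia.
  - destruct (Rle_dec u (x i)) as [H|H].
    + split;[lia|]. split;[auto|]. intros; lia.
    + destruct (IH (S i)) as [H1 [H2 H3]]. split;[lia|]. split.
      * intros; apply H2; lia.
      * intros m Hm. destruct (Nat.eq_dec m i).
        -- subst; apply Rnot_le_lt; exact H.
        -- apply H3; lia.
Qed.

Lemma part_lt x p : is_partition x p -> forall i j, (i < j)%nat -> (j <= p)%nat -> x i < x j.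
Proof.
  intros [_ [_ [_ H]]] i j. induction j; intros. lia.
  destruct (Nat.eq_dec i j). subst; apply H; lia.
  apply Rlt_trans with (x j). apply IHj; lia. apply H; lia.
Qed.

Lemma part_le x p : is_partition x p -> forall i j, (i <= j)%nat -> (j <= p)%nat -> x i <= x j.
Proof.
  intros Hp i j H1 H2. destruct (Nat.eq_dec i j). subst; lra.
  apply Rlt_le; apply (part_lt x p Hp); lia.
Qed.

Lemma x_in01 x p : is_partition x p -> forall i, (i <= p)%nat -> 0 <= x i <= 1.
Proof.
  intros Hp i Hi. pose proof Hp as [_ [H0 [H1 _]]].
  rewrite <- H0, <- H1. split; apply (part_le x p Hp); lia.
Qed.

Lemma cell_spec x p u : is_partition x p -> 0 <= u <= 1 ->
 (1 <= cell x p u <= p)%nat /\ x (cell x p u - 1)%nat <= u /\ u <= x (cell x p u)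
 /\ x (cell x p u - 1)%nat < x (cell x p u)
 /\ ((2 <= cell x p u)%nat -> x (cell x p u - 1)%nat < u).
Proof.
  intros Hp Hu. pose proof Hp as [Hp1 [H0 [H1 _]]]. unfold cell.
  destruct (fc_props x u (p-1) 1) as [B [U L]].
  set (c := find_cell x u 1 (p-1)) in *.
  split;[lia|]. split;[|split;[|split]].
  - destruct (Nat.eq_dec c 1). replace (c-1)%nat with 0%nat by lia; lra.
    apply Rlt_le, L; lia.
  - destruct (Nat.lt_ge_cases c (1 + (p-1))). apply U; lia.
    replace c with p by lia; lra.
  - apply (part_lt x p Hp); lia.
  - intros; apply L; lia.
Qed.

Lemma cell_mesh x p i : is_partition x p -> (1 <= i <= p)%nat -> cell x p (x i) = i.
Proof.
  intros Hp Hi. pose proof Hp as [Hp1 [H0 [H1 _]]]. unfold cell.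
  destruct (fc_props x (x i) (p-1) 1) as [B [U L]].
  set (c := find_cell x (x i) 1 (p-1)) in *.
  destruct (lt_eq_lt_dec c i) as [[Hl|He]|Hg]; auto.
  - assert (x i <= x c) by (apply U; lia).
    assert (x c < x i) by (apply (part_lt x p Hp); lia). lra.
  - assert (x i < x i) by (apply L; lia). lra.
Qed.

Lemma cell_0 x p : is_partition x p -> cell x p 0 = 1%nat.
Proof.
  intros Hp. pose proof Hp as [Hp1 [H0 [H1 _]]]. unfold cell.
  destruct (fc_props x 0 (p-1) 1) as [B [U L]].
  set (c := find_cell x 0 1 (p-1)) in *.
  destruct (Nat.eq_dec c 1); auto.
  assert (x 1%nat < 0) by (apply L; lia).
  assert (x 0%nat < x 1%nat) by (apply (part_lt x p Hp); lia). lra.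
Qed.

Definition Lc (x:nat->R) (f:nat->R) (c:nat) (u:R) :=
  (1 - (u - x (c-1)%nat)/(x c - x (c-1)%nat)) * f (c-1)%nat
  + (u - x (c-1)%nat)/(x c - x (c-1)%nat) * f c.
Definition Lin x (p:nat) f u := Lc x f (cell x p u) u.

Lemma a_bounds x0 x1 u : x0 < x1 -> x0 <= u <= x1 -> 0 <= (u-x0)/(x1-x0) <= 1.
Proof.
  intros H Hu. split.
  - unfold Rdiv; apply Rmult_le_pos; [lra|]. left; apply Rinv_0_lt_compat; lra.
  - apply Rmult_le_reg_r with (x1-x0); [lra|]. unfold Rdiv.
    rewrite Rmult_assoc, Rinv_l; lra.
Qed.

Lemma a_mono x0 x1 u u' : x0 < x1 -> u <= u' -> (u-x0)/(x1-x0) <= (u'-x0)/(x1-x0).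
Proof.
  intros. unfold Rdiv; apply Rmult_le_compat_r; [left; apply Rinv_0_lt_compat|]; lra.
Qed.

Lemma BL_Lx x y p q A u v : BL x y p q A u v = Lin x p (fun i => Lin y q (A i) v) u.
Proof. unfold BL, Lin, Lc; cbv beta zeta; ring. Qed.
Lemma BL_Ly x y p q A u v : BL x y p q A u v = Lin y q (fun j => Lin x p (fun i => A i j) u) v.
Proof. unfold BL, Lin, Lc; cbv beta zeta; ring. Qed.

Lemma Lin_sub x p f g u : Lin x p f u - Lin x p g u = Lin x p (fun i => f i - g i) u.
Proof. unfold Lin, Lc; ring. Qed.
Lemma Lin_subc x p f c u : Lin x p f u - c = Lin x p (fun i => f i - c) u.
Proof. unfold Lin, Lc; ring. Qed.
Lemma Lin_csub x p f c u : c - Lin x p f u = Lin x p (fun i => c - f i) u.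
Proof. unfold Lin, Lc; ring. Qed.
Lemma Lin_const x p c u : Lin x p (fun _ => c) u = c.
Proof. unfold Lin, Lc; ring. Qed.

Lemma Lin_id x p u : is_partition x p -> 0 <= u <= 1 -> Lin x p x u = u.
Proof.
  intros Hp Hu. destruct (cell_spec x p u Hp Hu) as [_ [_ [_ [D _]]]].
  unfold Lin, Lc. field. lra.
Qed.

Lemma Lin_ext x p f g u : is_partition x p -> 0 <= u <= 1 ->
  (forall i, (i <= p)%nat -> f i = g i) -> Lin x p f u = Lin x p g u.
Proof.
  intros Hp Hu H. destruct (cell_spec x p u Hp Hu) as [B _].
  unfold Lin, Lc. rewrite !H by lia. reflexivity.
Qed.

Lemma Lin_mesh x p f i : is_partition x p -> (i <= p)%nat -> Lin x p f (x i) = f i.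
Proof.
  intros Hp Hi. pose proof Hp as [Hp1 [H0 [H1 _]]]. unfold Lin.
  destruct (Nat.eq_dec i 0).
  - subst. rewrite H0, (cell_0 x p Hp). unfold Lc. change (1-1)%nat with 0%nat.
    rewrite H0. unfold Rdiv. replace (0 - 0) with 0 by ring. ring.
  - rewrite (cell_mesh x p i Hp) by lia. unfold Lc.
    assert (x (i-1)%nat < x i) by (apply (part_lt x p Hp); lia).
    replace ((x i - x (i - 1)%nat) / (x i - x (i - 1)%nat)) with 1 by (field; lra). ring.
Qed.

Lemma Lin_at0 x p f : is_partition x p -> Lin x p f 0 = f 0%nat.
Proof.
  intros Hp. pose proof Hp as [Hp1 [H0 [H1 _]]]. rewrite <- H0.
  apply Lin_mesh; auto; lia.
Qed.
Lemma Lin_at1 x p f : is_partition x p -> Lin x p f 1 = f p.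
Proof.
  intros Hp. pose proof Hp as [Hp1 [H0 [H1 _]]]. rewrite <- H1.
  apply Lin_mesh; auto.
Qed.

Lemma Lin_nonneg x p f u : is_partition x p -> 0 <= u <= 1 ->
  (forall i, (i <= p)%nat -> 0 <= f i) -> 0 <= Lin x p f u.
Proof.
  intros Hp Hu H. destruct (cell_spec x p u Hp Hu) as [B [L [U [D _]]]].
  unfold Lin, Lc. set (c := cell x p u) in *.
  pose proof (a_bounds _ _ _ D (conj L U)).
  set (a := (u - x (c-1)%nat) / (x c - x (c-1)%nat)) in *.
  assert (0 <= f (c-1)%nat) by (apply H; lia).
  assert (0 <= f c) by (apply H; lia). nra.
Qed.

Lemma Lin_mono x p f u u' : is_partition x p ->
  (forall i, (i < p)%nat -> f i <= f (S i)) -> 0 <= u -> u <= u' -> u' <= 1 ->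
  Lin x p f u <= Lin x p f u'.
Proof.
  intros Hp Hf H1 H2 H3.
  assert (fm : forall i j, (i <= j)%nat -> (j <= p)%nat -> f i <= f j).
  { intros i j Hij Hj. induction j. replace i with 0%nat by lia; lra.
    destruct (Nat.eq_dec i (S j)). subst; lra.
    apply Rle_trans with (f j). apply IHj; lia. apply Hf; lia. }
  destruct (cell_spec x p u Hp ltac:(lra)) as [B [L [U [D S]]]].
  destruct (cell_spec x p u' Hp ltac:(lra)) as [B' [L' [U' [D' S']]]].
  unfold Lin. set (c := cell x p u) in *. set (c' := cell x p u') in *.
  assert (Hcc : (c <= c')%nat).
  { destruct (Nat.le_gt_cases c c'); auto.
    assert (x c' <= x (c-1)%nat) by (apply (part_le x p Hp); lia).
    specialize (S ltac:(lia)). lra. }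
  pose proof (a_bounds _ _ _ D (conj L U)).
  pose proof (a_bounds _ _ _ D' (conj L' U')).
  destruct (Nat.eq_dec c c') as [E|E].
  - rewrite <- E. unfold Lc.
    pose proof (a_mono _ _ u u' D H2).
    assert (f (c-1)%nat <= f c) by (apply fm; lia).
    set (a := (u - x (c-1)%nat) / (x c - x (c-1)%nat)) in *.
    set (a' := (u' - x (c-1)%nat) / (x c - x (c-1)%nat)) in *. nra.
  - assert (f (c-1)%nat <= f c) by (apply fm; lia).
    assert (f c <= f (c'-1)%nat) by (apply fm; lia).
    assert (f (c'-1)%nat <= f c') by (apply fm; lia).
    unfold Lc.
    set (a := (u - x (c-1)%nat) / (x c - x (c-1)%nat)) in *.
    set (a' := (u' - x (c'-1)%nat) / (x c' - x (c'-1)%nat)) in *. nra.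
Qed.

Lemma vol_g x y p q A s1 s2 t1 t2 :
  VolR (BL x y p q A) s1 s2 t1 t2 =
  Lin y q (fun j => Lin x p (fun i => A i j) s2 - Lin x p (fun i => A i j) s1) t2
  - Lin y q (fun j => Lin x p (fun i => A i j) s2 - Lin x p (fun i => A i j) s1) t1.
Proof. unfold VolR, BL, Lin, Lc; cbv beta zeta; ring. Qed.

Lemma VolR_T x y p q A s1 s2 t1 t2 :
  VolR (BL x y p q A) s1 s2 t1 t2 = VolR (BL y x q p (fun j i => A i j)) t1 t2 s1 s2.
Proof. unfold VolR, BL; cbv beta zeta; ring. Qed.

Lemma BL_mesh x y p q A i j : is_partition x p -> is_partition y q ->
  (i <= p)%nat -> (j <= q)%nat -> BL x y p q A (x i) (y j) = A i j.
Proof.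
  intros Hx Hy Hi Hj. rewrite BL_Lx, (Lin_mesh x p _ i Hx Hi). cbv beta.
  apply Lin_mesh; auto.
Qed.

Lemma twoinc_BL x y p q A : is_partition x p -> is_partition y q ->
  two_increasing_mesh p q A -> two_increasing_sq (BL x y p q A).
Proof.
  intros Hx Hy HA s1 s2 t1 t2 ? ? ? ? ? ?. rewrite vol_g.
  cut (Lin y q (fun j => Lin x p (fun i => A i j) s2 - Lin x p (fun i => A i j) s1) t1 <=
       Lin y q (fun j => Lin x p (fun i => A i j) s2 - Lin x p (fun i => A i j) s1) t2); [lra|].
  apply Lin_mono; auto; try lra. intros j Hj.
  pose proof (Lin_sub x p (fun i => A i (S j)) (fun i => A i j) s1) as E1.
  pose proof (Lin_sub x p (fun i => A i (S j)) (fun i => A i j) s2) as E2.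
  cbv beta in E1, E2.
  assert (Lin x p (fun i => A i (S j) - A i j) s1 <= Lin x p (fun i => A i (S j) - A i j) s2).
  { apply Lin_mono; auto; try lra. intros i Hi.
    pose proof (HA i (S i) j (S j) ltac:(lia) ltac:(lia) ltac:(lia) ltac:(lia)).
    unfold VolM in *; lra. }
  lra.
Qed.

Lemma quasi_s0 x y p q A s2 t1 t2 : is_partition x p -> is_partition y q ->
  (forall i j, (i <= p)%nat -> (j < q)%nat -> 0 <= VolM A 0 i j (S j)) ->
  0 <= s2 <= 1 -> 0 <= t1 -> t1 <= t2 -> t2 <= 1 ->
  0 <= VolR (BL x y p q A) 0 s2 t1 t2.
Proof.
  intros Hx Hy HA Hs ? ? ?. rewrite vol_g.
  cut (Lin y q (fun j => Lin x p (fun i => A i j) s2 - Lin x p (fun i => A i j) 0) t1 <=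
       Lin y q (fun j => Lin x p (fun i => A i j) s2 - Lin x p (fun i => A i j) 0) t2); [lra|].
  apply Lin_mono; auto; try lra. intros j Hj.
  rewrite !(Lin_at0 x p _ Hx).
  pose proof (Lin_sub x p (fun i => A i (S j)) (fun i => A i j) s2) as E2.
  cbv beta in E2.
  pose proof (Lin_subc x p (fun i => A i (S j) - A i j) (A 0%nat (S j) - A 0%nat j) s2) as E3.
  cbv beta in E3.
  assert (0 <= Lin x p (fun i => A i (S j) - A i j - (A 0%nat (S j) - A 0%nat j)) s2).
  { apply Lin_nonneg; auto. intros i Hi.
    pose proof (HA i j Hi Hj). unfold VolM in *; lra. }
  lra.
Qed.

Lemma quasi_s1 x y p q A s1 t1 t2 : is_partition x p -> is_partition y q ->
  (forall i j, (i <= p)%nat -> (j < q)%nat -> 0 <= VolM A i p j (S j)) ->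
  0 <= s1 <= 1 -> 0 <= t1 -> t1 <= t2 -> t2 <= 1 ->
  0 <= VolR (BL x y p q A) s1 1 t1 t2.
Proof.
  intros Hx Hy HA Hs ? ? ?. rewrite vol_g.
  cut (Lin y q (fun j => Lin x p (fun i => A i j) 1 - Lin x p (fun i => A i j) s1) t1 <=
       Lin y q (fun j => Lin x p (fun i => A i j) 1 - Lin x p (fun i => A i j) s1) t2); [lra|].
  apply Lin_mono; auto; try lra. intros j Hj.
  rewrite !(Lin_at1 x p _ Hx).
  pose proof (Lin_sub x p (fun i => A i (S j)) (fun i => A i j) s1) as E2.
  cbv beta in E2.
  pose proof (Lin_csub x p (fun i => A i (S j) - A i j) (A p (S j) - A p j) s1) as E3.
  cbv beta in E3.
  assert (0 <= Lin x p (fun i => (A p (S j) - A p j) - (A i (S j) - A i j)) s1).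
  { apply Lin_nonneg; auto. intros i Hi.
    pose proof (HA i j Hi Hj). unfold VolM in *; lra. }
  lra.
Qed.

Lemma quasi_BL x y p q A : is_partition x p -> is_partition y q ->
  quasi_two_increasing_mesh p q A -> quasi_two_increasing_sq (BL x y p q A).
Proof.
  intros Hx Hy HA s1 s2 t1 t2 ? ? ? ? ? ? Hor.
  pose proof Hx as [Hp1 [X0 [X1 _]]]. pose proof Hy as [Hq1 [Y0 [Y1 _]]].
  destruct Hor as [ -> | [ -> | [ -> | -> ] ] ].
  - apply quasi_s0; auto; try lra; try (intros i j Hi Hj; apply HA; lia).
  - apply quasi_s1; auto; try lra; try (intros i j Hi Hj; apply HA; lia).
  - rewrite VolR_T. apply quasi_s0; auto; try lra. intros j i Hj Hi.
    pose proof (HA i (S i) 0%nat j ltac:(lia) ltac:(lia) ltac:(lia) ltac:(lia) ltac:(lia)).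
    unfold VolM in *; lra.
  - rewrite VolR_T. apply quasi_s1; auto; try lra. intros j i Hj Hi.
    pose proof (HA i (S i) j q ltac:(lia) ltac:(lia) ltac:(lia) ltac:(lia) ltac:(lia)).
    unfold VolM in *; lra.
Qed.

Lemma grounded_BL x y p q A : is_partition x p -> is_partition y q ->
  (grounded_mesh p q A <-> grounded_sq (BL x y p q A)).
Proof.
  intros Hx Hy. pose proof Hx as [Hp1 [X0 [X1 _]]]. pose proof Hy as [Hq1 [Y0 [Y1 _]]].
  split.
  - intros [G1 G2] t Ht. split.
    + rewrite BL_Ly, (Lin_at0 y q _ Hy). cbv beta.
      rewrite (Lin_ext x p _ (fun _ => 0) t Hx Ht G1). apply Lin_const.
    + rewrite BL_Lx, (Lin_at0 x p _ Hx).
      rewrite (Lin_ext y q _ (fun _ => 0) t Hy Ht G2). apply Lin_const.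
  - intros G. split.
    + intros i Hi. rewrite <- (BL_mesh x y p q A i 0 Hx Hy Hi ltac:(lia)), Y0.
      apply (G (x i)), (x_in01 x p Hx i Hi).
    + intros j Hj. rewrite <- (BL_mesh x y p q A 0 j Hx Hy ltac:(lia) Hj), X0.
      apply (G (y j)), (x_in01 y q Hy j Hj).
Qed.

Lemma neutral_BL x y p q A : is_partition x p -> is_partition y q ->
  (neutral_mesh x y p q A <-> neutral_sq (BL x y p q A)).
Proof.
  intros Hx Hy. pose proof Hx as [Hp1 [X0 [X1 _]]]. pose proof Hy as [Hq1 [Y0 [Y1 _]]].
  split.
  - intros [G1 G2] t Ht. split.
    + rewrite BL_Ly, (Lin_at1 y q _ Hy). cbv beta.
      rewrite (Lin_ext x p _ x t Hx Ht G1). apply Lin_id; auto.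
    + rewrite BL_Lx, (Lin_at1 x p _ Hx).
      rewrite (Lin_ext y q _ y t Hy Ht G2). apply Lin_id; auto.
  - intros G. split.
    + intros i Hi. rewrite <- (BL_mesh x y p q A i q Hx Hy Hi ltac:(lia)), Y1.
      apply (G (x i)), (x_in01 x p Hx i Hi).
    + intros j Hj. rewrite <- (BL_mesh x y p q A p j Hx Hy ltac:(lia) Hj), X1.
      apply (G (y j)), (x_in01 y q Hy j Hj).
Qed.

Lemma twoinc_iff x y p q A : is_partition x p -> is_partition y q ->
  (two_increasing_mesh p q A <-> two_increasing_sq (BL x y p q A)).
Proof.
  intros Hx Hy. split. apply twoinc_BL; auto.
  intros H i1 i2 j1 j2 ? ? ? ?.
  pose proof (x_in01 x p Hx i1 ltac:(lia)). pose proof (x_in01 x p Hx i2 ltac:(lia)).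
  pose proof (x_in01 y q Hy j1 ltac:(lia)). pose proof (x_in01 y q Hy j2 ltac:(lia)).
  specialize (H (x i1) (x i2) (y j1) (y j2)).
  unfold VolR in H; rewrite !(BL_mesh x y p q A _ _ Hx Hy) in H by lia.
  unfold VolM; apply H; try lra.
  apply (part_le x p Hx); lia. apply (part_le y q Hy); lia.
Qed.

Lemma quasi_iff x y p q A : is_partition x p -> is_partition y q ->
  (quasi_two_increasing_mesh p q A <-> quasi_two_increasing_sq (BL x y p q A)).
Proof.
  intros Hx Hy. pose proof Hx as [Hp1 [X0 [X1 _]]]. pose proof Hy as [Hq1 [Y0 [Y1 _]]].
  split. apply quasi_BL; auto.
  intros H i1 i2 j1 j2 ? ? ? ? Hor.
  pose proof (x_in01 x p Hx i1 ltac:(lia)). pose proof (x_in01 x p Hx i2 ltac:(lia)).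
  pose proof (x_in01 y q Hy j1 ltac:(lia)). pose proof (x_in01 y q Hy j2 ltac:(lia)).
  specialize (H (x i1) (x i2) (y j1) (y j2)).
  unfold VolR in H; rewrite !(BL_mesh x y p q A _ _ Hx Hy) in H by lia.
  unfold VolM; apply H; try lra.
  apply (part_le x p Hx); lia. apply (part_le y q Hy); lia.
  destruct Hor as [ -> | [ -> | [ -> | -> ] ] ]; auto.
Qed.

Theorem mainTheorem4 (p q : nat) (x y : nat -> R) (A : nat -> nat -> R) :
  is_partition x p -> is_partition y q ->
  one_increasing_mesh p q A ->
  (grounded_mesh p q A <-> grounded_sq (BL x y p q A)) /\
  (neutral_mesh x y p q A <-> neutral_sq (BL x y p q A)) /\
  (two_increasing_mesh p q A <-> two_increasing_sq (BL x y p q A)) /\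
  (quasi_two_increasing_mesh p q A <-> quasi_two_increasing_sq (BL x y p q A)) /\
  (discrete_copula x y p q A <-> copula (BL x y p q A)) /\
  (discrete_quasi_copula x y p q A <-> quasi_copula (BL x y p q A)).
Proof.
  intros Hx Hy _.
  pose proof (grounded_BL x y p q A Hx Hy) as G.
  pose proof (neutral_BL x y p q A Hx Hy) as N.
  pose proof (twoinc_iff x y p q A Hx Hy) as T.
  pose proof (quasi_iff x y p q A Hx Hy) as Q.
  unfold discrete_copula, copula, discrete_quasi_copula, quasi_copula.
  tauto.
Qed.
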